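(* Let $L$ be a relational language, let $\mathcal F$ be a set of finite irreducible $L$-structures, and let $\mathbf H$ be a countable $\mathcal F$-free $L$-structure (with vertex set $\omega$) universal for all countable $\mathcal F$-free $L$-structures. Assume that there are $\mathcal F$-free $L$-structures $\mathbf B$ and $\mathbf U$, each consisting of one vertex, and infinitely many pairwise non-isomorphic $\mathcal F$-free two-vertex $L$-structures $\mathbf C_0,\mathbf C_1,\dots$ such that in each $\mathbf C_i$ the first vertex induces a copy of $\mathbf B$ and the second (last) vertex induces a copy of $\mathbf U$. Then there exist an $\mathcal F$-free $L$-structure $\mathbf A$ on three vertices and a colouring $c:\binom{\mathbf H}{\mathbf A}\to\omega$ such that for every tree-like embedding $f:\mathbf H\to\mathbf H$, $c$ attains every value in $\omega$ on the set of embeddings $\mathbf A\to\mathbf H$ whose image lies in $f[\omega]$.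
   Context: Convention: every structure is countable, has vertex set some $n\in\omega$ or $\omega$ ordered naturally, embeddings are monotone (order-preserving) embeddings of $L$-structures, isomorphisms likewise respect the order; $\binom{\mathbf H}{\mathbf A}$ is the set of such embeddings $\mathbf A\to\mathbf H$. $\mathbf A$ is $\mathcal F$-free if no member of $\mathcal F$ embeds into it; universal for a class if every member of the class embeds into it. The Gaifman graph of a structure $\mathbf A$ joins distinct $x,y$ iff some tuple in some relation of $\mathbf A$ contains both; $\mathbf A$ is irreducible if its Gaifman graph is complete. For $X\subseteq\omega$, $\mathrm{tp}_{\mathbf H}(X)$ is the isomorphism type (respecting the order) of the substructure of $\mathbf H$ induced on $X$. An embedding $f:\mathbf H\to\mathbf H$ is tree-like if for every finite $X=\{x_0<\dots<x_m\}\subseteq\omega$, every $0\le i\le m$ and every $x\in\omega$ with $x>x_m$ there is $y>x_m$ such that $\mathrm{tp}_{\mathbf H}(f[X]\cup\{f(y)\})=\mathrm{tp}_{\mathbf H}(X\cup\{x\})$ and $\mathrm{tp}_{\mathbf H}(\{0,\dots,f(x_0)-1,f(y)\})=\mathrm{tp}_{\mathbf H}(\{0,\dots,f(x_0)-1,f(x_i)\})$. *)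

(* Defs.v *)
From mathcomp Require Import all_boot.
Set Implicit Arguments. Unset Strict Implicit. Unset Printing Implicit Defensive.

Inductive vset := Fin of nat | Omega.

Definition in_vset (V : vset) (x : nat) : bool :=
  match V with Fin n => x < n | Omega => true end.

(* A (countable) L-structure with vertex set n or omega, ordered naturally.
   Relations only contain tuples of vertices. *)
Unset Implicit Arguments.
Record structure (Sym : Type) (ar : Sym -> nat) := Structure {
  sdom : vset;
  srel : forall s : Sym, (ar s).-tuple nat -> Prop;
  srel_dom : forall s t, srel s t -> forall x, x \in t -> in_vset sdom x
}.
Set Implicit Arguments.
Arguments structure {Sym} ar.
Arguments Structure {Sym ar}.
Arguments srel_dom {Sym ar}.
Arguments sdom {Sym ar}.
Arguments srel {Sym ar}.

Section Defs.
Variables (Sym : Type) (ar : Sym -> nat).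
Notation str := (structure ar).

Definition vert (A : str) (x : nat) : bool := in_vset (sdom A) x.

(* Monotone (order-preserving) embedding A -> B, given by f : nat -> nat
   (only its values on the vertex set of A matter). *)
Definition emb (A B : str) (f : nat -> nat) : Prop :=
  (forall x, vert A x -> vert B (f x)) /\
  (forall x y, vert A x -> vert A y -> x < y -> f x < f y) /\
  (forall s (t : (ar s).-tuple nat), all (vert A) t ->
     (srel A s t <-> srel B s (map_tuple f t))).

Definition embeds (A B : str) : Prop := exists f, emb A B f.

Definition iso (A B : str) : Prop :=
  exists f, emb A B f /\ forall y, vert B y -> exists x, vert A x /\ f x = y.

Definition F_free (F : str -> Prop) (A : str) : Prop :=
  forall G, F G -> ~ embeds G A.

Definition finite_str (A : str) : Prop := exists n, sdom A = Fin n.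

Definition irreducible (A : str) : Prop :=
  forall x y, vert A x -> vert A y -> x <> y ->
    exists s (t : (ar s).-tuple nat), srel A s t /\ x \in t /\ y \in t.

(* Elements of binom(H, A) for a finite A on n vertices: an embedding is
   determined by its values on 0..n-1, recorded as the sequence e. *)
Definition emb_copy (A H : str) (n : nat) (e : seq nat) : Prop :=
  sdom A = Fin n /\ size e = n /\ emb A H (nth 0 e).

(* tp_H(X) = tp_H(Y) for (finite) X, Y ⊆ vertices of H, given as predicates:
   the order-preserving bijection X -> Y is an isomorphism of the induced
   substructures. *)
Definition same_tp (H : str) (X Y : nat -> bool) : Prop :=
  exists g : nat -> nat,
    (forall x, X x -> Y (g x)) /\
    (forall y, Y y -> exists x, X x /\ g x = y) /\
    (forall x y, X x -> X y -> x < y -> g x < g y) /\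
    (forall s (t : (ar s).-tuple nat), all X t ->
       (srel H s t <-> srel H s (map_tuple g t))).

(* A finite nonempty X = {x0 < ... < xm} is a strictly increasing nonempty
   sequence xs; x0 = head, xm = last; x_i ranges over the elements of xs. *)
Definition tree_like (H : str) (f : nat -> nat) : Prop :=
  emb H H f /\
  forall (x0 : nat) (xs : seq nat) (xi x : nat),
    sorted ltn (x0 :: xs) -> xi \in x0 :: xs -> last x0 xs < x ->
    exists y, last x0 xs < y /\
      same_tp H (fun z => (z \in map f (x0 :: xs)) || (z == f y))
                (fun z => (z \in x0 :: xs) || (z == x)) /\
      same_tp H (fun z => (z < f x0) || (z == f y))
                (fun z => (z < f x0) || (z == f xi)).

End Defs.

(* Main.v *)
Require Import Defs.
From mathcomp Require Import all_boot zify.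
From Stdlib Require Import ClassicalEpsilon.
Set Implicit Arguments. Unset Strict Implicit. Unset Printing Implicit Defensive.

Section S.
Variables (Sym : Type) (ar : Sym -> nat).
Notation str := (structure ar).

Lemma tup_eq s (t : (ar s).-tuple nat) (P : pred nat) (h1 h2 : nat -> nat) :
  all P t -> (forall v, P v -> h1 v = h2 v) -> map_tuple h1 t = map_tuple h2 t.
Proof.
move=> /allP Ht E; apply: val_inj => /=; apply/eq_in_map => v Hv; exact: E (Ht v Hv).
Qed.

Lemma map_tuple_comp s (t : (ar s).-tuple nat) (g h : nat -> nat) :
  map_tuple g (map_tuple h t) = map_tuple (g \o h) t.
Proof. apply: val_inj => /=; by rewrite map_comp. Qed.

Lemma emb_comp (G A K : str) phi rho : emb G A phi -> emb A K rho -> emb G K (rho \o phi).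
Proof.
move=> [v1 [m1 r1]] [v2 [m2 r2]]; split; [|split].
- move=> x Hx; exact: v2 (v1 x Hx).
- move=> x y Hx Hy xy; apply: m2; [exact: v1|exact: v1|exact: m1].
- move=> s t Ht; rewrite r1 // r2; last first.
    by apply/allP => z /mapP [w Hw ->]; apply: v1; apply: (allP Ht).
  by rewrite map_tuple_comp.
Qed.

Lemma F_free_emb (F : str -> Prop) A K rho : emb A K rho -> F_free F K -> F_free F A.
Proof. move=> e FK G HG [phi Hphi]; apply: (FK G HG); exists (rho \o phi); exact: emb_comp Hphi e. Qed.

Variable (H : str) (Hdom : sdom H = Omega).

Lemma vertH x : vert H x.
Proof. by rewrite /vert Hdom. Qed.

Lemma emb_fwd (A : str) hA h2 g (X : nat -> bool) :
 (forall x y, X x -> X y -> x < y -> g x < g y) ->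
 (forall s (t : (ar s).-tuple nat), all X t -> (srel H s t <-> srel H s (map_tuple g t))) ->
 emb A H hA -> (forall v, vert A v -> X (hA v)) -> (forall v, vert A v -> h2 v = g (hA v)) -> emb A H h2.
Proof.
move=> gm gr [_ [m1 r1]] XA E; split; [|split].
- move=> x _; exact: vertH.
- move=> x y Hx Hy xy; rewrite !E //; apply: gm; [exact: XA|exact: XA|exact: m1].
- move=> s t Ht; rewrite r1 // gr; last first.
    by apply/allP => z /mapP [w Hw ->]; apply: XA; apply: (allP Ht).
  by rewrite map_tuple_comp (tup_eq Ht E).
Qed.

Lemma emb_bwd (A : str) hA h2 g (X : nat -> bool) :
 (forall x y, X x -> X y -> x < y -> g x < g y) ->
 (forall s (t : (ar s).-tuple nat), all X t -> (srel H s t <-> srel H s (map_tuple g t))) ->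
 emb A H hA -> (forall v, vert A v -> X (h2 v)) -> (forall v, vert A v -> g (h2 v) = hA v) -> emb A H h2.
Proof.
move=> gm gr [_ [m1 r1]] XA E; split; [|split].
- move=> x _; exact: vertH.
- move=> x y Hx Hy xy; case: (ltngtP (h2 x) (h2 y)) => // c.
    have := gm _ _ (XA _ Hy) (XA _ Hx) c; rewrite !E // => c'.
    by have := m1 _ _ Hx Hy xy; lia.
  have := m1 _ _ Hx Hy xy; by rewrite -!E // c; lia.
- move=> s t Ht; rewrite r1 // (gr _ (map_tuple h2 t)); last first.
    by apply/allP => z /mapP [w Hw ->]; apply: XA; apply: (allP Ht).
  by rewrite map_tuple_comp (tup_eq (h2 := hA) Ht E).
Qed.

Lemma fix_init (g : nat -> nat) n a b : n <= a ->
  (forall x, (x < n) || (x == a) -> (g x < n) || (g x == b)) ->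
  (forall x y, (x < n) || (x == a) -> (y < n) || (y == a) -> x < y -> g x < g y) ->
  (forall d, d < n -> g d = d) /\ g a = b.
Proof.
move=> na Hin gm.
have up : forall d, d < n -> d <= g d.
  elim=> [//|d IH] dn; have := gm d d.+1; rewrite dn (ltnW dn) => /(_ isT isT (ltnSn d)).
  have := IH (ltnW dn); lia.
have lta : forall d, d < n -> g d < g a.
  move=> d dn; apply: gm; rewrite ?dn ?eqxx ?orbT //; lia.
have ga : g a = b.
  have := Hin a; rewrite eqxx orbT => /(_ isT) /orP [|/eqP //].
  case: n na up lta {Hin gm} => [//|n] _ up lta.
  have := up n (ltnSn n); have := lta n (ltnSn n); lia.
split=> // d dn.
have gdn : g d < n.
  have := Hin d; rewrite dn => /(_ isT) /orP [//|/eqP E].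
  have := lta d dn; lia.
have steps : forall k, d + k < n -> g d + k <= g (d + k).
  elim=> [|k IH] dk; first by rewrite !addn0.
  have h1 : (d + k < n) || (d + k == a) by apply/orP; left; lia.
  have h2 : (d + k.+1 < n) || (d + k.+1 == a) by apply/orP; left; lia.
  have h3 : d + k < d + k.+1 by lia.
  have := gm _ _ h1 h2 h3; have := IH ltac:(lia).
  lia.
have st := steps (n.-1 - d) ltac:(lia).
rewrite (_ : d + (n.-1 - d) = n.-1) in st; last by lia.
have hn1 : (n.-1 < n) || (n.-1 == a) by apply/orP; left; lia.
have := lta n.-1 ltac:(lia); rewrite ga => l.
have := up d dn.
move: (Hin _ hn1) => /orP [h|/eqP h]; lia.
Qed.

Lemma fix4 (g : nat -> nat) a0 a1 a2 a3 b0 b1 b2 b3 :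
  a0 < a1 -> a1 < a2 -> a2 < a3 -> b0 < b1 -> b1 < b2 -> b2 < b3 ->
  (forall x, (x \in [:: a0; a1; a2]) || (x == a3) -> (g x \in [:: b0; b1; b2]) || (g x == b3)) ->
  (forall x y, (x \in [:: a0; a1; a2]) || (x == a3) -> (y \in [:: a0; a1; a2]) || (y == a3) ->
     x < y -> g x < g y) ->
  [/\ g a0 = b0, g a1 = b1, g a2 = b2 & g a3 = b3].
Proof.
move=> h01 h12 h23 k01 k12 k23 Hin gm.
have X0 : (a0 \in [:: a0; a1; a2]) || (a0 == a3) by rewrite !inE eqxx.
have X1 : (a1 \in [:: a0; a1; a2]) || (a1 == a3) by rewrite !inE eqxx !orbT.
have X2 : (a2 \in [:: a0; a1; a2]) || (a2 == a3) by rewrite !inE eqxx !orbT.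
have X3 : (a3 \in [:: a0; a1; a2]) || (a3 == a3) by rewrite !inE eqxx !orbT.
have m1 := gm _ _ X0 X1 h01; have m2 := gm _ _ X1 X2 h12; have m3 := gm _ _ X2 X3 h23.
have mem : forall z, (z \in [:: b0; b1; b2]) || (z == b3) -> z = b0 \/ z = b1 \/ z = b2 \/ z = b3.
  move=> z; rewrite !inE => /orP [/orP [/eqP ->|/orP [/eqP ->|/eqP ->]]|/eqP ->]; tauto.
have y0 := mem _ (Hin _ X0); have y1 := mem _ (Hin _ X1).
have y2 := mem _ (Hin _ X2); have y3 := mem _ (Hin _ X3).
have u3 : g a3 <= b3 by lia.
have u2 : g a2 <= b2 by lia.
have u1 : g a1 <= b1 by lia.
have u0 : g a0 = b0 by lia.
have v1 : g a1 = b1 by lia.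
have v2 : g a2 = b2 by lia.
have v3 : g a3 = b3 by lia.
by split.
Qed.
End S.

Section S2.
Variables (Sym : Type) (ar : Sym -> nat).
Notation str := (structure ar).
Variables (F : str -> Prop) (B U : str) (C : nat -> str).
Hypothesis HB : sdom B = Fin 1.
Hypothesis HU : sdom U = Fin 1.
Hypothesis HC : forall i, sdom (C i) = Fin 2 /\ F_free F (C i) /\
          emb B (C i) (fun _ => 0) /\ emb U (C i) (fun _ => 1).

Lemma map_tuple_id s (t : (ar s).-tuple nat) : map_tuple id t = t.
Proof. apply: val_inj => /=; exact: map_id. Qed.

Lemma C0 i i' s (t : (ar s).-tuple nat) : all (pred1 0) t ->
  (srel (C i) s t <-> srel (C i') s t).
Proof.
move=> Ht.
have eB : forall j, srel B s t <-> srel (C j) s t.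
  move=> j; have [_ [_ [[_ [_ r]] _]]] := HC j.
  rewrite r; last by apply/allP => z /(allP Ht) /eqP ->; rewrite /vert HB.
  by rewrite (tup_eq (h2 := id) Ht) ?map_tuple_id // => v /eqP ->.
by rewrite -(eB i) (eB i').
Qed.

Lemma C1 i s (t : (ar s).-tuple nat) : all (pred1 1) t ->
  (srel (C i) s t <-> srel U s (map_tuple (fun _ => 0) t)).
Proof.
move=> Ht; have [_ [_ [_ [_ [_ r]]]]] := HC i.
rewrite r; last by apply/allP => z /mapP [w _ ->]; rewrite /vert HU.
rewrite map_tuple_comp (tup_eq (h2 := id) Ht) ?map_tuple_id //.
by move=> v /eqP ->.
Qed.

Definition piD (z : nat) := if z == 0 then 0 else 1.
Definition kap (k k' j : nat) := if j == 3 then k else k'.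
Definition inj (j z : nat) := (z == 0) || (z == j).

Definition Drel k k' s (t : (ar s).-tuple nat) : Prop :=
  exists j, [/\ 0 < j, j < 4, all (inj j) t & srel (C (kap k k' j)) s (map_tuple piD t)].
Arguments Drel : clear implicits.

Lemma Drel_dom k k' s t : Drel k k' s t -> forall x, x \in t -> in_vset (Fin 4) x.
Proof.
move=> [j [j0 j4 Ht _]] x /(allP Ht); rewrite /inj /= => /orP [/eqP ->|/eqP ->] //.
Qed.

Definition D k k' : str := Structure (Fin 4) (Drel k k') (@Drel_dom k k').

Lemma D_rel k k' j s (t : (ar s).-tuple nat) : 0 < j -> j < 4 -> all (inj j) t ->
  (srel (D k k') s t <-> srel (C (kap k k' j)) s (map_tuple piD t)).
Proof.
move=> j0 j4 Ht; split; last by move=> r; exists j; split.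
move=> [j' [j0' j4' Ht' r]].
case: (boolP (all (pred1 0) t)) => [A0|/allPn [z zt /= zn]].
  have A0' : all (pred1 0) (map_tuple piD t).
    by apply/allP => z /mapP [w /(allP A0) /eqP -> ->].
  by rewrite (C0 (kap k k' j) (kap k k' j') A0').
have := allP Ht z zt; have := allP Ht' z zt; rewrite /inj (negbTE zn) /=.
by move=> /eqP -> /eqP E; rewrite -E.
Qed.

Hypothesis HF : forall G, F G -> finite_str G /\ irreducible G.

Lemma D_free k k' : F_free F (D k k').
Proof.
move=> G HG [phi [pv [pm pr]]].
have [_ irr] := HF HG.
have [j [j0 j4 Hj]] : exists j, [/\ 0 < j, j < 4 & forall u, vert G u -> inj j (phi u)].
  case: (classic (exists v, vert G v /\ phi v != 0)) => [[v [Gv nv]]|N].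
    exists (phi v); split; first by lia.
      by have := pv v Gv; rewrite /vert /=.
    move=> u Gu; case: (eqVneq u v) => [->|uv]; first by rewrite /inj eqxx orbT.
    have [s [t [r [ut vt]]]] := irr u v Gu Gv (fun E => negP uv (introT eqP E)).
    have At : all (vert G) t by apply/allP => z zt; exact: srel_dom r z zt.
    move: r; rewrite pr // => -[j' [_ _ Ht' _]].
    have := allP Ht' _ (map_f phi vt); have := allP Ht' _ (map_f phi ut).
    by rewrite /inj (negbTE nv) /= => ? /eqP E; rewrite E.
  exists 1; split=> // u Gu; rewrite /inj; case: (eqVneq (phi u) 0) => //= nu.
  by exfalso; apply: N; exists u.
have [_ [FC _]] := HC (kap k k' j).
apply: (FC G HG); exists (piD \o phi); split; [|split].
- by move=> x _; rewrite /vert (HC _).1 /= /piD; case: ifP.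
- move=> x y Gx Gy xy; have := pm _ _ Gx Gy xy.
  move: (Hj _ Gx) (Hj _ Gy); rewrite /inj /piD /=.
  move=> /orP [/eqP ->|/eqP ->] /orP [/eqP ->|/eqP ->]; try lia.
  have jn : (j == 0) = false by lia.
  by rewrite eqxx jn.
- move=> s t Ht; rewrite pr // (D_rel _ _ j0 j4); first by rewrite map_tuple_comp.
  by apply/allP => z /mapP [w /(allP Ht) Gw ->]; exact: Hj.
Qed.

Definition Arel s (t : (ar s).-tuple nat) : Prop :=
  (exists v, v < 3 /\ all (pred1 v) t) /\ srel U s (map_tuple (fun _ => 0) t).
Arguments Arel : clear implicits.

Lemma Arel_dom s t : Arel s t -> forall x, x \in t -> in_vset (Fin 3) x.
Proof. by move=> [[v [v3 Ht]] _] x /(allP Ht) /eqP ->. Qed.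

Definition A : str := Structure (Fin 3) Arel Arel_dom.

Lemma emb_AD k k' : emb A (D k k') succn.
Proof.
split; [|split].
- by move=> x; rewrite /vert /=.
- by move=> x y _ _.
- move=> s t Ht; split.
  + move=> [[v [v3 Hv]] r]; exists v.+1; split => //.
      by apply/allP => z /mapP [w /(allP Hv) /eqP -> ->]; rewrite /inj eqxx orbT.
    rewrite C1; last by apply/allP => z /mapP [w /mapP [w' _ ->] ->].
    by rewrite !map_tuple_comp.
  + move=> [j [j0 j4 Hj r]]; split.
      exists j.-1; split; first by lia.
      apply/allP => z zt; have := allP Hj _ (map_f succn zt); rewrite /inj /=.
      move=> /eqP <-; by [].
    move: r; rewrite C1; last by apply/allP => z /mapP [w /mapP [w' _ ->] ->].
    by rewrite !map_tuple_comp.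
Qed.

Lemma A_free : F_free F (D 0 0) -> F_free F A.
Proof. exact: F_free_emb (emb_AD 0 0). Qed.

Definition iotaJ j (v : nat) := if v == 0 then 0 else j.

Lemma emb_CD k k' j : 0 < j -> j < 4 -> emb (C (kap k k' j)) (D k k') (iotaJ j).
Proof.
move=> j0 j4; split; [|split].
- by move=> x _; rewrite /vert /iotaJ /=; case: ifP.
- move=> x y; rewrite /vert (HC _).1 /iotaJ /= => x2 y2 xy.
  have -> : x == 0 by lia.
  have -> : (y == 0) = false by lia.
  done.
- move=> s t Ht; rewrite (D_rel _ _ j0 j4).
    rewrite map_tuple_comp (tup_eq (h2 := id) Ht) ?map_tuple_id //.
    move=> v; rewrite /vert (HC _).1 /= /iotaJ /piD => v2.
    case: (eqVneq v 0) => [->|v0] //=.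
    have -> : (j == 0) = false by lia.
    lia.
  by apply/allP => z /mapP [w _ ->]; rewrite /inj /iotaJ; case: ifP; rewrite ?eqxx ?orbT.
Qed.

End S2.

Section S3.
Variables (Sym : Type) (ar : Sym -> nat).
Notation str := (structure ar).
Variables (F : str -> Prop) (B U : str) (C : nat -> str).
Hypothesis HB : sdom B = Fin 1.
Hypothesis HU : sdom U = Fin 1.
Hypothesis HC : forall i, sdom (C i) = Fin 2 /\ F_free F (C i) /\
          emb B (C i) (fun _ => 0) /\ emb U (C i) (fun _ => 1).
Hypothesis HF : forall G, F G -> finite_str G /\ irreducible G.
Hypothesis HCiso : forall i j, i <> j -> ~ iso (C i) (C j).
Variables (H : str).
Hypothesis Hdom : sdom H = Omega.

Lemma vertC i v : vert (C i) v = (v < 2).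
Proof. by rewrite /vert (HC i).1. Qed.

Definition typ k d r := emb (C k) H (fun v => if v == 0 then d else r).

Lemma typ_uniq k1 k2 d r : typ k1 d r -> typ k2 d r -> k1 = k2.
Proof.
move=> [_ [_ r1]] [_ [_ r2]]; case: (eqVneq k1 k2) => [//|ne]; exfalso.
apply: (HCiso (fun E => negP ne (introT eqP E))).
exists id; split; [split; [|split]|].
- by move=> x; rewrite !vertC.
- by [].
- move=> s t Ht; rewrite map_tuple_id r1 // -r2 //.
  by apply/allP => z /(allP Ht); rewrite !vertC.
- by move=> y Hy; exists y; rewrite vertC -(vertC k2).
Qed.

Definition Q r q d k := typ k d r /\ ~ typ k d q /\
  forall d' k', d' < d -> typ k' d' r -> typ k' d' q.

Definition color (e : seq nat) : nat :=
  (epsilon (inhabits (0, 0)) (fun p : nat * nat => Q (nth 0 e 2) (nth 0 e 1) p.1 p.2)).2.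

Lemma color_spec e d k : Q (nth 0 e 2) (nth 0 e 1) d k -> color e = k.
Proof.
move=> Hq.
have := epsilon_spec (inhabits (0, 0)) (fun p : nat * nat => Q (nth 0 e 2) (nth 0 e 1) p.1 p.2)
  (ex_intro _ (d, k) Hq).
rewrite /color; case: (epsilon _ _) => d2 k2 /= [t2 [n2 m2]].
case: Hq => [t1 [n1 m1]].
case: (ltngtP d d2) => c.
- by exfalso; apply: n1; apply: m2.
- by exfalso; apply: n2; apply: m1.
- by subst d2; apply: typ_uniq t2 t1.
Qed.


Hypothesis Huniv : forall A : str, F_free F A -> embeds A H.

Lemma mainS : exists A : str,
    sdom A = Fin 3 /\ F_free F A /\
    exists c : seq nat -> nat,
      forall f, tree_like H f ->
        forall k : nat, exists e : seq nat,
          emb_copy A H 3 e /\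
          (forall z, z \in e -> exists w, f w = z) /\
          c e = k.
Proof.
have FA : F_free F (A U) := A_free HU HC (D_free HB HC HF (k := 0) (k' := 0)).
exists (A U); split; first by []; split; first exact: FA.
exists color => f [femb ftl] k.
have [h hemb] := Huniv (D_free HB HC HF (k := k) (k' := k.+1)).
have hm : forall i j, i < j -> j < 4 -> h i < h j.
  move=> i j ij j4; case: hemb => _ [m _]; apply: m => //; rewrite /vert /=; lia.
have fm : forall x y, x < y -> f x < f y.
  move=> x y xy; case: femb => _ [m _]; apply: m => //; exact: vertH Hdom _.
have h01 := hm 0 1 isT isT; have h12 := hm 1 2 isT isT; have h23 := hm 2 3 isT isT.
have srt : sorted ltn [:: h 0; h 1; h 2] by rewrite /= h01 h12.
have mem2 : h 2 \in [:: h 0; h 1; h 2] by rewrite !inE eqxx !orbT.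
have [y [yl [st1 st2]]] := ftl (h 0) [:: h 1; h 2] (h 2) (h 3) srt mem2 h23.
simpl in yl.
case: st1 => g1 [g1in [_ [g1m g1r]]].
case: st2 => g2 [g2in [_ [g2m g2r]]].
have [e0 e1 e2 e3] := fix4 (fm _ _ h01) (fm _ _ h12) (fm _ _ yl) h01 h12 h23 g1in g1m.
have [g2fix g2y] := fix_init (ltnW (fm _ _ (ltn_trans h01 (ltn_trans h12 yl)))) g2in g2m.
pose X1 := fun z => (z \in [seq f i | i <- [:: h 0; h 1; h 2]]) || (z == f y).
pose X2 := fun z => (z < f (h 0)) || (z == f y).
have M0 : (f (h 0) \in [seq f i | i <- [:: h 0; h 1; h 2]]) || (f (h 0) == f y).
  by rewrite /= !inE eqxx.
have M1 : (f (h 1) \in [seq f i | i <- [:: h 0; h 1; h 2]]) || (f (h 1) == f y).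
  by rewrite /= !inE eqxx !orbT.
have M2 : (f (h 2) \in [seq f i | i <- [:: h 0; h 1; h 2]]) || (f (h 2) == f y).
  by rewrite /= !inE eqxx !orbT.
have M3 : (f y \in [seq f i | i <- [:: h 0; h 1; h 2]]) || (f y == f y).
  by rewrite eqxx orbT.
exists [:: f (h 1); f (h 2); f y]; split; [|split].
- split; first by []; split; first by [].
  have E := (emb_bwd Hdom (hA := h \o succn) (g := g1) (X := X1) g1m g1r).
  apply: E.
  + exact: emb_comp (emb_AD HU HC k k.+1) hemb.
  + by move=> v; rewrite /vert /=; case: v => [|[|[|v]]].
  + by move=> v; rewrite /vert /=; case: v => [|[|[|v]]].
- move=> z; rewrite !inE => /orP [/eqP->|/orP [/eqP->|/eqP->]]; eexists; reflexivity.
- apply: (color_spec (d := f (h 0))); rewrite /=; split; [|split].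
  + have E := (emb_bwd Hdom (hA := h \o iotaJ 3) (g := g1) (X := X1) g1m g1r); apply: E.
    * exact: emb_comp (emb_CD HB HC k k.+1 (j := 3) isT isT) hemb.
    * by move=> v; rewrite vertC; case: v => [|[|v]].
    * by move=> v; rewrite vertC; case: v => [|[|v]].
  + move=> T.
    have T' : typ k.+1 (f (h 0)) (f (h 2)).
      have E := (emb_bwd Hdom (hA := h \o iotaJ 2) (g := g1) (X := X1) g1m g1r); apply: E.
      * exact: emb_comp (emb_CD HB HC k k.+1 (j := 2) isT isT) hemb.
      * by move=> v; rewrite vertC; case: v => [|[|v]].
      * by move=> v; rewrite vertC; case: v => [|[|v]].
    have := typ_uniq T T'; lia.
  + move=> d' k' dl T.
    have E := (emb_fwd Hdom (hA := fun v => if v == 0 then d' else f y) (g := g2) (X := X2) g2m g2r T); apply: E.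
    * by move=> v; rewrite vertC; case: v => [|[|v]] //= _; rewrite /X2 /= ?dl ?eqxx ?orbT.
    * by move=> v; rewrite vertC; case: v => [|[|v]] //= _; rewrite ?g2fix ?g2y.
Qed.
End S3.
Theorem theorem6p2 (Sym : Type) (ar : Sym -> nat)
  (F : structure ar -> Prop)
  (HF : forall G, F G -> finite_str G /\ irreducible G)
  (H : structure ar)
  (Hdom : sdom H = Omega)
  (Hfree : F_free F H)
  (Huniv : forall A : structure ar, F_free F A -> embeds A H)
  (B U : structure ar)
  (HB : sdom B = Fin 1 /\ F_free F B)
  (HU : sdom U = Fin 1 /\ F_free F U)
  (C : nat -> structure ar)
  (HC : forall i, sdom (C i) = Fin 2 /\ F_free F (C i) /\
          emb B (C i) (fun _ => 0) /\ emb U (C i) (fun _ => 1))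
  (HCiso : forall i j, i <> j -> ~ iso (C i) (C j)) :
  exists A : structure ar,
    sdom A = Fin 3 /\ F_free F A /\
    exists c : seq nat -> nat,
      forall f, tree_like H f ->
        forall k : nat, exists e : seq nat,
          emb_copy A H 3 e /\
          (forall z, z \in e -> exists w, f w = z) /\
          c e = k.
Proof.
exact: (@mainS Sym ar F B U C HB.1 HU.1 HC HF HCiso H Hdom Huniv).
Qed.
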